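(* Suppose the family of sets $\{\tau^{(n)}_{r,s}(B(r,n)):n\ge1,\ 1\le r\le m_n,\ 1\le s\le k(r,n)\}$ is a basis for the topology of $X$. For $n\ge1$ let $\widetilde C(U_n,\mathbb Z)=\{f\in C(U_n,\mathbb Z): f \text{ is constant on } B(r,n) \text{ for each } 1\le r\le m_n\}$. Then the connecting maps $\phi_n$ map $\widetilde C(U_n,\mathbb Z)$ into $\widetilde C(U_{n+1},\mathbb Z)$, and the inclusions $\widetilde C(U_n,\mathbb Z)\subseteq C(U_n,\mathbb Z)$ induce a group isomorphism $$\varinjlim\big(\widetilde C(U_n,\mathbb Z),\phi_n|_{\widetilde C(U_n,\mathbb Z)}\big)\cong\varinjlim\big(C(U_n,\mathbb Z),\phi_n\big).$$
   Context: Let $X$ be a compact metrizable space having a basis of clopen sets. A partial homeomorphism of $X$ is a homeomorphism $\sigma:\mathrm{Dom}(\sigma)\to\mathrm{Ran}(\sigma)$ between clopen subsets of $X$. The composition $\rho\circ\sigma$ has domain $\sigma^{-1}(\mathrm{Ran}(\sigma)\cap\mathrm{Dom}(\rho))$. Data: positive integers $m_n$ ($n\ge1$), $m_0=1$; for each $n\ge1$ and $1\le r\le m_n$ a nonempty clopen set $B(r,n)\subseteq X$, such that for fixed $n$ the sets $B(1,n),\dots,B(m_n,n)$ are pairwise disjoint, a positive integer $\kappa(r,n)$, and partial homeomorphisms $\sigma^{(n)}_{r,s}$ ($1\le s\le\kappa(r,n)$) with $\mathrm{Dom}(\sigma^{(n)}_{r,s})=B(r,n)$. Put $U_n=\bigcup_{r=1}^{m_n}B(r,n)$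 for $n\ge1$ and $U_0=B(1,0)=X$. Standing conditions, for every $n\ge1$: (i) $\sigma^{(n)}_{r,1}$ is the identity map of $B(r,n)$ for all $r$; (ii) for all $r,s$ there is $i\in\{1,\dots,m_{n-1}\}$ with $\sigma^{(n)}_{r,s}(B(r,n))\subseteq B(i,n-1)$; (iii) the sets $\sigma^{(n)}_{r,s}(B(r,n))$ ($1\le r\le m_n$, $1\le s\le\kappa(r,n)$) are pairwise disjoint and their union is $U_{n-1}$. For $n\ge1$ and $1\le r\le m_n$ let $\tau^{(n)}_{r,1},\dots,\tau^{(n)}_{r,k(r,n)}$ enumerate the partial homeomorphisms $\sigma^{(1)}_{r_1,s_1}\circ\cdots\circ\sigma^{(n)}_{r_n,s_n}$ over all index sequences with $r_n=r$ and $\sigma^{(j)}_{r_j,s_j}(B(r_j,j))\subseteq B(r_{j-1},j-1)$ for $2\le j\le n$ (each has domain $B(r,n)$). $C(U_n,\mathbb Z)$ is the group of continuous integer-valued functions on $U_n$, and $\phi_n:C(U_n,\mathbb Z)\to C(U_{n+1},\mathbb Z)$ is the homomorphism defined, for $x\in B(r,n+1)$, by $\phi_n(\xi)(x)=\sum_{s=1}^{\kappa(r,n+1)}\xi(\sigma^{(n+1)}_{r,s}(x))$. *)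

(* Defs.v *)
From HB Require Import structures.
From mathcomp Require Import all_boot all_order all_algebra.
From mathcomp Require Import all_classical all_reals.
From mathcomp Require Import topology.

Set Implicit Arguments.
Unset Strict Implicit.
Unset Printing Implicit Defensive.

Import Order.TTheory GRing.Theory Num.Theory.
Local Open Scope classical_set_scope.
Local Open Scope ring_scope.

(** A partial homeomorphism of X with domain D, given by a (total) function
    f : X -> X whose restriction to D is the partial map: D is clopen, the
    range f(D) is clopen, and f : D -> f(D) is a homeomorphism. *)
Definition partial_homeo {X : topologicalType} (D : set X) (f : X -> X) : Prop :=
  clopen D /\ clopen (f @` D) /\
  (forall x y, D x -> D y -> f x = f y -> x = y) /\
  {within D, continuous f} /\
  (exists g : X -> X, {within f @` D, continuous g} /\
                      (forall x, D x -> g (f x) = x)).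

(** U_n = union of B(r,n), 1 <= r <= m_n  (with the conventions
    m_0 = 1, B(1,0) = X imposed as hypotheses of the theorem). *)
Definition Uset {X : Type} (m : nat -> nat) (B : nat -> nat -> set X) (n : nat)
  : set X := [set x | exists2 r : nat, (1 <= r <= m n)%N & B r n x].

Fixpoint comp_chain {X : Type} (sigma : nat -> nat -> nat -> X -> X)
  (rs ss : nat -> nat) (n : nat) : X -> X :=
  match n with
  | 0 => id
  | n'.+1 => comp_chain sigma rs ss n' \o sigma n'.+1 (rs n'.+1) (ss n'.+1)
  end.

Definition admissible {X : Type} (m : nat -> nat) (B : nat -> nat -> set X)
  (kappa : nat -> nat -> nat) (sigma : nat -> nat -> nat -> X -> X)
  (rs ss : nat -> nat) (n : nat) : Prop :=
  (forall j, (1 <= j <= n)%N -> (1 <= rs j <= m j)%N /\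
                                (1 <= ss j <= kappa (rs j) j)%N) /\
  (forall j, (2 <= j <= n)%N ->
     sigma j (rs j) (ss j) @` B (rs j) j `<=` B (rs j.-1) j.-1).

Definition tau_images {X : Type} (m : nat -> nat) (B : nat -> nat -> set X)
  (kappa : nat -> nat -> nat) (sigma : nat -> nat -> nat -> X -> X)
  : set (set X) :=
  [set A | exists n : nat, exists rs ss : nat -> nat,
     (1 <= n)%N /\ admissible m B kappa sigma rs ss n /\
     A = comp_chain sigma rs ss n @` B (rs n) n].

(** The connecting map phi_n : C(U_n,Z) -> C(U_{n+1},Z), on representatives
    (functions X -> int; only their values on U_n / U_{n+1} matter). *)
Definition phi {X : Type} (m : nat -> nat) (B : nat -> nat -> set X)
  (kappa : nat -> nat -> nat) (sigma : nat -> nat -> nat -> X -> X)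
  (n : nat) (xi : X -> int) : X -> int :=
  fun x => \sum_(1 <= r < (m n.+1).+1)
     (if x \in B r n.+1
      then \sum_(1 <= s < (kappa r n.+1).+1) xi (sigma n.+1 r s x)
      else 0).

Fixpoint phis {X : Type} (ph : nat -> (X -> int) -> (X -> int))
  (n d : nat) (f : X -> int) : X -> int :=
  match d with
  | 0 => f
  | d'.+1 => ph (n + d')%N (phis ph n d' f)
  end.

Definition CZ {X : topologicalType} (U : nat -> set X) (n : nat) (f : X -> int)
  : Prop := {within U n, continuous (f : X -> discrete_topology int)}.

Definition CZt {X : topologicalType} (m : nat -> nat) (B : nat -> nat -> set X)
  (n : nat) (f : X -> int) : Prop :=
  CZ (Uset m B) n f /\
  (forall r, (1 <= r <= m n)%N -> forall x y, B r n x -> B r n y -> f x = f y).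

(** Direct limit of the system (G_n, ph_n), where G_n is the set of
    representatives f with P n f, elements of G_n being equal when they agree
    on U n.  The direct limit is the setoid of pairs (n, f), f in G_n, with
    (n,f) ~ (p,g) iff their images in some G_k, k >= n, p, coincide. *)
Definition dl_carrier {X : Type} (P : nat -> (X -> int) -> Prop)
  (a : nat * (X -> int)) : Prop := P a.1 a.2.

Definition dl_eq {X : Type} (U : nat -> set X)
  (ph : nat -> (X -> int) -> (X -> int)) (a b : nat * (X -> int)) : Prop :=
  exists k : nat, [/\ (a.1 <= k)%N, (b.1 <= k)%N &
    forall x, U k x ->
      phis ph a.1 (k - a.1) a.2 x = phis ph b.1 (k - b.1) b.2 x].

Definition dl_add {X : Type} (ph : nat -> (X -> int) -> (X -> int))
  (a b : nat * (X -> int)) : nat * (X -> int) :=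
  let k := maxn a.1 b.1 in
  (k, fun x => phis ph a.1 (k - a.1) a.2 x + phis ph b.1 (k - b.1) b.2 x).

(** F (a map on representatives) induces a group isomorphism
    lim (P_n, ph) -> lim (Q_n, ph): it maps the carrier into the carrier, is
    well defined on classes, additive, injective and surjective on classes. *)
Definition induces_dl_iso {X : Type} (U : nat -> set X)
  (ph : nat -> (X -> int) -> (X -> int))
  (P Q : nat -> (X -> int) -> Prop)
  (F : nat * (X -> int) -> nat * (X -> int)) : Prop :=
  [/\ (forall a, dl_carrier P a -> dl_carrier Q (F a)),
      (forall a b, dl_carrier P a -> dl_carrier P b ->
                   dl_eq U ph a b -> dl_eq U ph (F a) (F b)),
      (forall a b, dl_carrier P a -> dl_carrier P b ->
                   dl_eq U ph (F (dl_add ph a b)) (dl_add ph (F a) (F b))),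
      (forall a b, dl_carrier P a -> dl_carrier P b ->
                   dl_eq U ph (F a) (F b) -> dl_eq U ph a b) &
      (forall c, dl_carrier Q c ->
                 exists2 a, dl_carrier P a & dl_eq U ph (F a) c)].

(* Main.v *)
Require Import Defs.
From HB Require Import structures.
From mathcomp Require Import all_boot all_order all_algebra.
From mathcomp Require Import all_classical all_reals.
From mathcomp Require Import topology.
Import Order.TTheory GRing.Theory Num.Theory.
Local Open Scope classical_set_scope.
Local Open Scope ring_scope.

Definition LC {X : topologicalType} (A : set X) (f : X -> int) :=
  forall x, A x -> nbhs x (fun y => A y -> f y = f x).

Lemma CZ_LC (X : topologicalType) (A : set X) (f : X -> int) :
  {within A, continuous (f : X -> discrete_topology int)} <-> LC A f.
Proof.
rewrite subspace_continuousP; split.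
- move=> h x Ax; have := h x Ax.
  move/(@discrete_cvg (discrete_topology int)).
  by [].

- move=> h x Ax; apply/(@discrete_cvg (discrete_topology int)).
  exact: h.
Qed.

Lemma within_cont_nbhs (X Y : topologicalType) (D : set X) (f : X -> Y) x :
  {within D, continuous f} -> D x ->
  forall N, nbhs (f x) N -> nbhs x (fun y => D y -> N (f y)).
Proof.
move=> /subspace_continuousP h Dx N HN.
exact: (h x Dx N HN).
Qed.

Lemma open_nbhs_in (X : topologicalType) (A : set X) x : open A -> A x -> nbhs x A.
Proof. by move=> oA Ax; apply: open_nbhs_nbhs. Qed.
Arguments open_nbhs_in {X A x}.

Lemma seq_bound (T : eqType) (Q : T -> nat -> Prop) (s : seq T) :
  (forall C, C \in s -> exists p, Q C p) ->
  exists P, forall C, C \in s -> exists2 p, (p <= P)%N & Q C p.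
Proof.
elim: s => [|a s IH] h; first by exists 0%N.
have [pa Qa] := h a (mem_head _ _).
have [P HP] : exists P, forall C, C \in s -> exists2 p, (p <= P)%N & Q C p.
  by apply: IH => C Cs; apply: h; rewrite inE Cs orbT.
exists (maxn pa P) => C; rewrite inE => /orP [/eqP->|Cs].
  by exists pa => //; rewrite leq_maxl.
have [p pP Qp] := HP C Cs; exists p => //; apply: leq_trans pP (leq_maxr _ _).
Qed.

Lemma Uset_clopen (X : topologicalType) (m : nat -> nat) (B : nat -> nat -> set X) n :
  (forall r, (1 <= r <= m n)%N -> clopen (B r n)) -> clopen (Uset m B n).
Proof.
move=> hc.
have -> : Uset m B n = \bigcup_(r in [set` iota 1 (m n)]) B r n.
  apply/seteqP; split=> x.
    by case=> r hr Bx; exists r => //=; rewrite mem_iota add1n ltnS.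
  by case=> r /=; rewrite mem_iota add1n ltnS => hr Bx; exists r.
split.
  apply: bigcup_open => r /=; rewrite mem_iota add1n ltnS => hr.
  by case: (hc r hr).
apply: closed_bigcup; first exact: finite_seq.
by move=> r /=; rewrite mem_iota add1n ltnS => hr; case: (hc r hr).
Qed.

Inductive Fam {X : Type} (m : nat -> nat) (B : nat -> nat -> set X)
  (kappa : nat -> nat -> nat) (sigma : nat -> nat -> nat -> X -> X) (P : nat)
  : nat -> set X -> Prop :=
| FamB r : (1 <= r <= m P)%N -> Fam m B kappa sigma P P (B r P)
| FamS q A r s : Fam m B kappa sigma P q.+1 A -> (1 <= r <= m q.+1)%N ->
    A `<=` B r q.+1 -> (1 <= s <= kappa r q.+1)%N ->
    Fam m B kappa sigma P q (sigma q.+1 r s @` A).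

Lemma Fam_le {X : Type} m (B : nat -> nat -> set X) kappa sigma P q A :
  Fam m B kappa sigma P q A -> (q <= P)%N.
Proof. by elim=> // q' A' r s _ IH *; apply: ltnW. Qed.

Lemma Fam_sub {X : Type} m (B : nat -> nat -> set X) kappa sigma P q A
  (hnest : forall n r s, (1 <= n)%N -> (1 <= r <= m n)%N ->
          (1 <= s <= kappa r n)%N ->
          exists2 i : nat, (1 <= i <= m n.-1)%N &
            sigma n r s @` B r n `<=` B i n.-1) :
  Fam m B kappa sigma P q A -> exists2 r, (1 <= r <= m q)%N & A `<=` B r q.
Proof.
case=> [r hr|q' A' r s _ hr sub hs]; first by exists r.
have [i hi si] := hnest q'.+1 r s erefl hr hs.
by exists i => // y [x Ax <-]; apply: si; exists x => //; apply: sub.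
Qed.
Arguments Fam_le {X m B kappa sigma P q A}.
Arguments Fam_sub {X m B kappa sigma P q A}.
Arguments FamB {X m B kappa sigma P} r.
Arguments FamS {X m B kappa sigma P q A r s}.

Lemma Fam_disj {X : Type} m (B : nat -> nat -> set X) kappa sigma P
  (hP : (1 <= P)%N)
  (hBdisj : forall n r r', (1 <= n)%N -> (1 <= r <= m n)%N ->
          (1 <= r' <= m n)%N -> r <> r' -> B r n `&` B r' n = set0)
  (hinj : forall n r s, (1 <= n)%N -> (1 <= r <= m n)%N ->
          (1 <= s <= kappa r n)%N -> forall x y, B r n x -> B r n y ->
          sigma n r s x = sigma n r s y -> x = y)
  (hpart_disj : forall n r s r' s', (1 <= n)%N -> (1 <= r <= m n)%N ->
          (1 <= s <= kappa r n)%N -> (1 <= r' <= m n)%N ->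
          (1 <= s' <= kappa r' n)%N -> (r, s) <> (r', s') ->
          sigma n r s @` B r n `&` sigma n r' s' @` B r' n = set0) :
  forall q A, Fam m B kappa sigma P q A -> forall C, Fam m B kappa sigma P q C ->
  A `&` C !=set0 -> A = C.
Proof.
move=> q A; elim=> [r hr|q' A' r s FA' IH hr sub hs] C FC.
  inversion FC as [r' hr' E|q2 C' r' s' FC' hr' sub' hs' E1 E2]; subst.
    case=> z [Bz Bz']; case: (eqVneq r r') => [->//|ne].
    have := hBdisj P r r' hP hr hr' (elimN eqP ne).
    by move=> /seteqP[+ _] => /(_ z (conj Bz Bz')).
  by have := Fam_le FC'; rewrite ltnn.
inversion FC as [r' hr' E|q2 C' r' s' FC' hr' sub' hs' E1 E2]; subst.
  by have := Fam_le FA'; rewrite ltnn.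
case=> z [[a A'a <-] [c C'c E]].
have rs : (r, s) = (r', s').
  apply: contrapT => ne.
  have := hpart_disj q'.+1 r s r' s' erefl hr hs hr' hs' ne.
  move=> /seteqP[+ _] => /(_ (sigma q'.+1 r s a)); apply.
  by split; [exists a => //; apply: sub|exists c => //; apply: sub'].
case: rs => Er Es; subst r' s'.
have ac : a = c.
  apply: (hinj q'.+1 r s erefl hr hs) => //; [exact: sub|exact: sub'].
subst c.
by rewrite (IH C' FC' _) //; exists a.
Qed.

Lemma Fam_refine {X : Type} m (B : nat -> nat -> set X) kappa sigma P p
  (hBdisj : forall n r r', (1 <= n)%N -> (1 <= r <= m n)%N ->
          (1 <= r' <= m n)%N -> r <> r' -> B r n `&` B r' n = set0)
  (hnest : forall n r s, (1 <= n)%N -> (1 <= r <= m n)%N ->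
          (1 <= s <= kappa r n)%N ->
          exists2 i : nat, (1 <= i <= m n.-1)%N &
            sigma n r s @` B r n `<=` B i n.-1) :
  (p <= P)%N ->
  forall q A, Fam m B kappa sigma P q A -> (q <= p)%N -> A !=set0 ->
  exists2 A', Fam m B kappa sigma p q A' & A `<=` A'.
Proof.
move=> pP q A FA; elim: FA => [r hr|q' A0 r s FA0 IH hr sub hs] qp neA.
  have -> : p = P by apply/eqP; rewrite eqn_leq pP qp.
  by exists (B r P) => //; apply: FamB.
case: (ltngtP q' p) => [lt|gt|eq]; last first.
- subst q'.
  have [r' hr' sub'] := Fam_sub hnest (FamS FA0 hr sub hs).
  by exists (B r' p) => //; apply: FamB.
- by move: qp; rewrite leqNgt gt.
have [a A0a] : A0 !=set0 by case: neA => y [x Ax _]; exists x.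
have [A0' FA0' sA0] := IH lt (ex_intro _ a A0a).
have [r' hr' sub'] := Fam_sub hnest FA0'.
have rr : r = r'.
  apply: contrapT => ne.
  have := hBdisj q'.+1 r r' erefl hr hr' ne.
  by move=> /seteqP[+ _] => /(_ a (conj (sub a A0a) (sub' a (sA0 a A0a)))).
subst r'.
exists (sigma q'.+1 r s @` A0'); first exact: FamS.
by move=> y [x Ax <-]; exists x => //; apply: sA0.
Qed.

Lemma Fam_down {X : Type} m (B : nat -> nat -> set X) kappa sigma P
  (hkappa : forall n r, (1 <= n)%N -> (1 <= r <= m n)%N -> (1 <= kappa r n)%N)
  (hid : forall n r x, (1 <= n)%N -> (1 <= r <= m n)%N -> B r n x ->
          sigma n r 1%N x = x)
  (hnest : forall n r s, (1 <= n)%N -> (1 <= r <= m n)%N ->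
          (1 <= s <= kappa r n)%N ->
          exists2 i : nat, (1 <= i <= m n.-1)%N &
            sigma n r s @` B r n `<=` B i n.-1) :
  forall q A, Fam m B kappa sigma P q A ->
  exists2 A', Fam m B kappa sigma P 0 A' & A `<=` A'.
Proof.
elim=> [|q IH] A FA; first by exists A.
have [r hr sub] := Fam_sub hnest FA.
have hs : (1 <= 1 <= kappa r q.+1)%N by rewrite /= hkappa.
have [A' FA' sA'] := IH _ (FamS FA hr sub hs).
exists A' => // x Ax; apply: sA'; exists x => //.
by apply: hid => //; apply: sub.
Qed.

Lemma tau_Fam {X : Type} m (B : nat -> nat -> set X) kappa sigma C :
  tau_images m B kappa sigma C ->
  exists2 p, (1 <= p)%N & Fam m B kappa sigma p 0 C.
Proof.
case=> n [rs [ss [n1 [[adm1 adm2] ->]]]].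
exists n => //.
suff H : forall j, (j <= n)%N -> forall A, Fam m B kappa sigma n j A ->
    ((1 <= j)%N -> A `<=` B (rs j) j) ->
    Fam m B kappa sigma n 0 (comp_chain sigma rs ss j @` A).
  apply: H => //; first by apply: FamB; case: (adm1 n); rewrite ?n1 ?leqnn.
  by move=> _ x.
elim=> [|j IH] jn A FA sub.
  by rewrite image_id.
rewrite /= -image_comp.
have [hr hs] := adm1 j.+1 (jn).
apply: IH; first exact: ltnW.
  by apply: FamS => //; apply: sub.
move=> j1 y [x Ax <-]; apply: (adm2 j.+1); first by rewrite ltnS j1 jn.
by exists x => //; apply: sub.
Qed.

Lemma phi_on_B {X : Type} m (B : nat -> nat -> set X) kappa sigma
  (hBdisj : forall n r r', (1 <= n)%N -> (1 <= r <= m n)%N ->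
          (1 <= r' <= m n)%N -> r <> r' -> B r n `&` B r' n = set0)
  q g r x : (1 <= r <= m q.+1)%N -> B r q.+1 x ->
  phi m B kappa sigma q g x =
  \sum_(1 <= s < (kappa r q.+1).+1) g (sigma q.+1 r s x).
Proof.
move=> hr Bx; rewrite /phi (bigD1_seq r) /=; last exact: iota_uniq.
  rewrite (mem_set Bx) [X in _ + X]big1_seq ?addr0 // => i /andP[ne]; rewrite mem_index_iota ltnS => hi.
  case: ifP => // /set_mem Bix; exfalso.
  have := hBdisj q.+1 i r erefl hi hr (elimN eqP ne).
  by move=> /seteqP[+ _] => /(_ x (conj Bix Bx)).
by rewrite mem_index_iota ltnS.
Qed.

Lemma phi_LC {X : topologicalType} m (B : nat -> nat -> set X) kappa sigma q g
  (hBdisj : forall n r r', (1 <= n)%N -> (1 <= r <= m n)%N ->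
          (1 <= r' <= m n)%N -> r <> r' -> B r n `&` B r' n = set0)
  (hBo : forall r, (1 <= r <= m q.+1)%N -> open (B r q.+1))
  (hcont : forall r s, (1 <= r <= m q.+1)%N -> (1 <= s <= kappa r q.+1)%N ->
     {within B r q.+1, continuous sigma q.+1 r s})
  (hnest : forall r s, (1 <= r <= m q.+1)%N -> (1 <= s <= kappa r q.+1)%N ->
     exists2 i : nat, (1 <= i <= m q)%N & sigma q.+1 r s @` B r q.+1 `<=` B i q) :
  LC (Uset m B q) g -> LC (Uset m B q.+1) (phi m B kappa sigma q g).
Proof.
move=> hg x [r hr Bx].
have Bn : nbhs x (B r q.+1) by apply: open_nbhs_in => //; apply: hBo.
have H : forall k, (k <= kappa r q.+1)%N -> nbhs x (fun y => B r q.+1 y ->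
    forall s, (1 <= s <= k)%N -> g (sigma q.+1 r s y) = g (sigma q.+1 r s x)).
  elim=> [|k IH] hk.
    by apply: filterS filterT => y _ _ s /andP[s1 s0]; move: (leq_trans s1 s0).
  have hs : (1 <= k.+1 <= kappa r q.+1)%N by rewrite /= hk.
  have [i hi si] := hnest r k.+1 hr hs.
  have Ui : forall y, B r q.+1 y -> Uset m B q (sigma q.+1 r k.+1 y).
    by move=> y By; exists i => //; apply: si; exists y.
  have one := @within_cont_nbhs _ _ _ _ x (hcont r k.+1 hr hs) Bx _ (hg _ (Ui x Bx)).
  apply: filterS (filterI (IH (ltnW hk)) one) => y [h1 h2] By s /andP[s1].
  rewrite leq_eqVlt ltnS => /orP[/eqP->|sk]; first exact: h2 (Ui y By).
  by apply: h1 => //; rewrite s1.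
apply: filterS (filterI Bn (H _ (leqnn _))) => y [By eqs] _.
rewrite (@phi_on_B _ m B kappa sigma hBdisj q g r y hr By) (@phi_on_B _ m B kappa sigma hBdisj q g r x hr Bx); apply: eq_big_nat => s hs.
by apply: eqs; rewrite ltnS in hs.
Qed.
Arguments tau_Fam {X m B kappa sigma C}.
Arguments Fam_refine {X m B kappa sigma P p}.
Arguments Fam_down {X m B kappa sigma P}.
Arguments Fam_disj {X m B kappa sigma P}.

Theorem mainTheorem8
  (R : realType) (X : pseudoMetricType R)
  (hT2 : hausdorff_space X) (hcpt : compact [set: X])
  (hclopen_basis : exists2 Bs : set (set X), basis Bs & Bs `<=` clopen)
  (m : nat -> nat) (B : nat -> nat -> set X) (kappa : nat -> nat -> nat)
  (sigma : nat -> nat -> nat -> X -> X)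
  (hm0 : m 0%N = 1%N) (hB0 : B 1%N 0%N = [set: X])
  (hm : forall n, (1 <= n)%N -> (1 <= m n)%N)
  (hB : forall n r, (1 <= n)%N -> (1 <= r <= m n)%N ->
          clopen (B r n) /\ B r n !=set0)
  (hBdisj : forall n r r', (1 <= n)%N -> (1 <= r <= m n)%N ->
          (1 <= r' <= m n)%N -> r <> r' -> B r n `&` B r' n = set0)
  (hkappa : forall n r, (1 <= n)%N -> (1 <= r <= m n)%N -> (1 <= kappa r n)%N)
  (hsigma : forall n r s, (1 <= n)%N -> (1 <= r <= m n)%N ->
          (1 <= s <= kappa r n)%N -> partial_homeo (B r n) (sigma n r s))
  (hid : forall n r x, (1 <= n)%N -> (1 <= r <= m n)%N -> B r n x ->
          sigma n r 1%N x = x)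
  (hnest : forall n r s, (1 <= n)%N -> (1 <= r <= m n)%N ->
          (1 <= s <= kappa r n)%N ->
          exists2 i : nat, (1 <= i <= m n.-1)%N &
            sigma n r s @` B r n `<=` B i n.-1)
  (hpart_disj : forall n r s r' s', (1 <= n)%N -> (1 <= r <= m n)%N ->
          (1 <= s <= kappa r n)%N -> (1 <= r' <= m n)%N ->
          (1 <= s' <= kappa r' n)%N -> (r, s) <> (r', s') ->
          sigma n r s @` B r n `&` sigma n r' s' @` B r' n = set0)
  (hpart_cover : forall n, (1 <= n)%N ->
          [set x | exists r s, [/\ (1 <= r <= m n)%N,
                                  (1 <= s <= kappa r n)%N &
                                  (sigma n r s @` B r n) x]]
          = Uset m B n.-1)
  (htau_basis : basis (tau_images m B kappa sigma)) :
  (forall n f, (1 <= n)%N -> CZt m B n f ->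
     CZt m B n.+1 (phi m B kappa sigma n f)) /\
  induces_dl_iso (Uset m B) (phi m B kappa sigma)
    (fun n f => (1 <= n)%N /\ CZt m B n f)
    (fun n f => (1 <= n)%N /\ CZ (Uset m B) n f)
    id.
Proof.
have hinj : forall n r s, (1 <= n)%N -> (1 <= r <= m n)%N ->
    (1 <= s <= kappa r n)%N -> forall x y, B r n x -> B r n y ->
    sigma n r s x = sigma n r s y -> x = y.
  by move=> n r s n1 hr hs; case: (hsigma n r s n1 hr hs) => _ [_ [? _]].
have hcont : forall n r s, (1 <= n)%N -> (1 <= r <= m n)%N ->
    (1 <= s <= kappa r n)%N -> {within B r n, continuous sigma n r s}.
  by move=> n r s n1 hr hs; case: (hsigma n r s n1 hr hs) => _ [_ [_ [? _]]].
have Ucl : forall n, clopen (Uset m B n).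
  case=> [|n]; apply: Uset_clopen => r hr.
    have -> : r = 1%N by apply/eqP; rewrite eqn_leq; move: hr; rewrite hm0 => /andP[-> ->].
    by rewrite hB0; split; [exact: openT|exact: closedT].
  by case: (hB n.+1 r erefl hr).
have LCt : forall q g, LC (Uset m B q) g ->
    LC (Uset m B q.+1) (phi m B kappa sigma q g).
  move=> q g; apply: phi_LC => //.
  - by move=> r hr; case: (hB q.+1 r erefl hr) => [[]].
  - by move=> r s hr hs; apply: hcont.
  - by move=> r s hr hs; apply: (hnest q.+1 r s erefl hr hs).
split.
  move=> n f n1 [cz hc]; split.
    by apply/CZ_LC; apply: LCt; apply/CZ_LC.
  move=> r hr x y Bx By.
  rewrite (@phi_on_B _ m B kappa sigma hBdisj n f r x hr Bx).
  rewrite (@phi_on_B _ m B kappa sigma hBdisj n f r y hr By).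
  apply: eq_big_nat => s; rewrite ltnS => hs.
  have [i hi si] := hnest n.+1 r s erefl hr hs.
  by apply: (hc i) => //; apply: si; [exists x|exists y].
split.
- by move=> [n f] /= [n1 [cz _]].
- by [].
- move=> [a1 a2] [b1 b2] _ _; exists (maxn a1 b1); split => //.
- by [].
move=> [n f] /= [n1 cz].
have hf : LC (Uset m B n) f by apply/CZ_LC.
have cptU : compact (Uset m B n).
  by apply: (subclosed_compact (Ucl n).2 hcpt).
pose D := [set C : set X | tau_images m B kappa sigma C /\
                           (forall y z, C y -> C z -> f y = f z)].
pose Q := fun (i : nat) (x' : X) => exists2 C, D C &
   exists2 p, ((1 <= p)%N /\ (p <= i)%N) /\ Fam m B kappa sigma p 0 C & C x'.
have nc := (compact_near_coveringP _).1 cptU nat \oo Q _.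
have [P0 _ HP0] : \forall i \near \oo, Uset m B n `<=` Q i.
  apply: nc => x Ux.
  pose L := fun y => Uset m B n y /\ f y = f x.
  have hL : nbhs x L.
    have h1 := open_nbhs_in (Ucl n).1 Ux.
    have h2 := hf x Ux.
    have h3 := @filterI _ _ (nbhs_filter x) _ _ h1 h2.
    apply: (@filterS _ _ (nbhs_filter x) _ _ _ h3).
    by move=> y [Uy h]; split => //; apply: h.
  have [C [tC Cx] CL] := htau_basis.2 x L hL.
  have [p p1 FC] := tau_Fam tC.
  rewrite /prop_near2 /filter_prod /filter_from /=; exists (C, (fun i : nat => ((p <= i)%N : Prop))); first split.
    exact: open_nbhs_in (htau_basis.1 C tC) Cx.
    by exists p.
  move=> [x' i] [/= Cx' pi]; exists C.
    by split => // y z /CL [_ ->] /CL [_ ->].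
  by exists p.
have {}HP0 := HP0 P0 (leqnn P0).
pose P := maxn n P0.
have nP : (n <= P)%N by apply: leq_maxl.
have K : forall A, Fam m B kappa sigma P n A ->
    forall x y, A x -> A y -> f x = f y.
  move=> A FA x y Ax Ay.
  have [r hr sub] := Fam_sub hnest FA.
  have [C DC [p [[p1 pP0] FC] Cx]] := HP0 x (ex_intro2 _ _ r hr (sub x Ax)).
  have [A'' FA'' sA''] := Fam_down hkappa hid hnest _ _ FA.
  have pP : (p <= P)%N by apply: leq_trans pP0 (leq_maxr _ _).
  have [A' FA' sA'] := Fam_refine hBdisj hnest pP _ _ FA'' (leq0n p)
    (ex_intro _ x (sA'' x Ax)).
  have eqAC := Fam_disj p1 hBdisj hinj hpart_disj _ _ FA' _ FC
    (ex_intro _ x (conj (sA' x (sA'' x Ax)) Cx)).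
  by apply: DC.2; rewrite -eqAC; apply: sA'; apply: sA''.
have Kd : forall d A, Fam m B kappa sigma P (n + d)%N A ->
    forall x y, A x -> A y -> phis (phi m B kappa sigma) n d f x =
                             phis (phi m B kappa sigma) n d f y.
  elim=> [|d IH] A FA x y Ax Ay.
    by rewrite addn0 in FA; exact: (K A FA).
  rewrite addnS in FA.
  have [r hr sub] := Fam_sub hnest FA.
  rewrite /= (@phi_on_B _ m B kappa sigma hBdisj _ _ r x hr (sub x Ax)).
  rewrite (@phi_on_B _ m B kappa sigma hBdisj _ _ r y hr (sub y Ay)).
  apply: eq_big_nat => s; rewrite ltnS => hs.
  by apply: (IH _ (FamS FA hr sub hs)); [exists x|exists y].
have LCd : forall d, LC (Uset m B (n + d)%N) (phis (phi m B kappa sigma) n d f).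
  by elim=> [|d IH]; [rewrite addn0|rewrite addnS; apply: LCt].
exists (P, phis (phi m B kappa sigma) n (P - n)%N f).
  split; first by apply: leq_trans n1 nP.
  split.
    by apply/CZ_LC; have := LCd (P - n)%N; rewrite subnKC.
  move=> r hr x y Bx By; apply: (Kd (P - n)%N (B r P)) => //.
  by rewrite subnKC //; apply: FamB.
exists P; split => //= x _; rewrite subnn.
by [].
Qed.
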